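(* A $C^1$-diffeomorphism $\mathbf f:\mathcal Z\to\mathcal X$ ($\mathcal Z=\mathbb R^{d_z}$, $\mathcal X=\mathbf f(\mathcal Z)\subseteq\mathbb R^{d_x}$) is compositional and irreducible if and only if $\mathbf f$ has at most $0$-th order interaction across slots and satisfies interaction asymmetry of order $0$ for all equivalent generators.
   Context: Fix a partition $\{B_1,\dots,B_K\}$ of $[d_z]$ into nonempty slots; $\mathbf z_S=(z_i)_{i\in S}$; $\odot$ is entrywise product. For $S\subseteq[d_z]$, $I_S(\mathbf z):=\{l\in[d_x]: (D_i f_l(\mathbf z))_{i\in S}\ne\mathbf 0\}$; write $I_k:=I_{B_k}$. For $T\subseteq[d_x]$, $D\mathbf f_T(\mathbf z)$ is the $|T|\times d_z$ Jacobian of $(f_l)_{l\in T}$. Compositionality: for all $\mathbf z$ and all $k\ne j$, $I_k(\mathbf z)\cap I_j(\mathbf z)=\emptyset$. Irreducibility: for all $\mathbf z$, $k\in[K]$ and every partition $I_k(\mathbf z)=S_1\cup S_2$ into disjoint nonempty sets, $\mathrm{rank}(D\mathbf f_{S_1}(\mathbf z))+\mathrm{rank}(D\mathbf f_{S_2}(\mathbf z))>\mathrm{rank}(D\mathbf f_{I_k(\mathbf z)}(\mathbf z))$. At most $0$-th order interaction between $\mathbf z_A,\mathbf z_B$ (nonempty $A,B\subseteq[d_z]$): $D_i\mathbf f(\mathbf z)\odot D_j\mathbf f(\mathbf z)=\mathbf 0$ for all $\mathbf z$, $i\in A$, $j\in B$; if this fails at some $\mathbf z$ (for some $i\in A,j\in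 B$), $\mathbf z_A,\mathbf z_B$ have first-order interaction at $\mathbf z$. $\mathbf f$ has at most $0$-th order interaction across slots if all pairs of distinct slots do. Interaction asymmetry of order $0$: (i) $\mathbf f$ has at most $0$-th order interaction across slots; (ii) for every $\mathbf z$, every $k$, and all nonempty $A,B$ with $A\cup B=B_k$, $\mathbf z_A,\mathbf z_B$ have first-order interaction within $\mathbf f$ at $\mathbf z$. Equivalent generator: $\bar{\mathbf f}:\mathbb R^{d_z}\to\mathbb R^{d_x}$ with $\bar{\mathbf f}(\mathbf M_1\mathbf z_{B_1},\dots,\mathbf M_K\mathbf z_{B_K})=\mathbf f(\mathbf z)$ for all $\mathbf z$, for some invertible $\mathbf M_k\in\mathbb R^{|B_k|\times|B_k|}$; ''for all equivalent generators'' means every such $\bar{\mathbf f}$ satisfies the property. *)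

(* Defs.v *)
From HB Require Import structures.
From mathcomp Require Import all_boot all_order all_algebra.
From mathcomp Require Import all_classical all_reals all_analysis.
Set Implicit Arguments. Unset Strict Implicit. Unset Printing Implicit Defensive.
Import Order.TTheory GRing.Theory Num.Theory.
Import numFieldNormedType.Exports.

Local Open Scope classical_set_scope.
Local Open Scope ring_scope.

Section Defs.
Variables (R : realType) (dz dx K : nat).
Variable B : 'I_dz -> 'I_K.

Definition slot (k : 'I_K) : {set 'I_dz} := [set i | B i == k].

Definition slots_nonempty : Prop := forall k : 'I_K, (0 < #|slot k|)%N.

Definition ebasis (i : 'I_dz) : 'rV[R]_dz := delta_mx 0 i.

Definition pder (f : 'rV[R]_dz -> 'rV[R]_dx) (i : 'I_dz) (l : 'I_dx)
  (z : 'rV[R]_dz) : R := ('D_(ebasis i) f z) 0 l.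

Definition jac (f : 'rV[R]_dz -> 'rV[R]_dx) (z : 'rV[R]_dz) : 'M[R]_(dx, dz) :=
  \matrix_(l < dx, i < dz) pder f i l z.

Definition jacT (f : 'rV[R]_dz -> 'rV[R]_dx) (T : {set 'I_dx})
  (z : 'rV[R]_dz) : 'M[R]_(#|T|, dz) :=
  \matrix_(k < #|T|, i < dz) pder f i (enum_val k) z.

(* C^1 diffeomorphism from R^dz onto its image f(R^dz) in R^dx
   (C^1 embedding: C^1, immersive, homeomorphism onto its image) *)
Definition C1_diffeo_onto_image (f : 'rV[R]_dz -> 'rV[R]_dx) : Prop :=
  [/\ forall z, differentiable f z,
      forall i l, continuous (pder f i l),
      forall z, \rank (jac f z) = dz &
      exists g : 'rV[R]_dx -> 'rV[R]_dz,
        (forall z, g (f z) = z) /\ {within (range f), continuous g}].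

Definition Iset (f : 'rV[R]_dz -> 'rV[R]_dx) (S : {set 'I_dz})
  (z : 'rV[R]_dz) : {set 'I_dx} :=
  [set l | [exists i in S, pder f i l z != 0]].

Definition compositional (f : 'rV[R]_dz -> 'rV[R]_dx) : Prop :=
  forall z (k j : 'I_K), k != j ->
    Iset f (slot k) z :&: Iset f (slot j) z = finset.set0.

Definition irreducible (f : 'rV[R]_dz -> 'rV[R]_dx) : Prop :=
  forall z (k : 'I_K) (S1 S2 : {set 'I_dx}),
    (0 < #|S1|)%N -> (0 < #|S2|)%N -> S1 :&: S2 = finset.set0 ->
    S1 :|: S2 = Iset f (slot k) z ->
    (\rank (jacT f S1 z) + \rank (jacT f S2 z) > \rank (jacT f (Iset f (slot k) z) z))%N.

Definition atmost0 (f : 'rV[R]_dz -> 'rV[R]_dx) (A C : {set 'I_dz}) : Prop :=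
  forall z i j, i \in A -> j \in C ->
    forall l, pder f i l z * pder f j l z = 0.

Definition first_order_at (f : 'rV[R]_dz -> 'rV[R]_dx) (A C : {set 'I_dz})
  (z : 'rV[R]_dz) : Prop :=
  exists i j l, [/\ i \in A, j \in C & pder f i l z * pder f j l z != 0].

Definition atmost0_across_slots (f : 'rV[R]_dz -> 'rV[R]_dx) : Prop :=
  forall k j : 'I_K, k != j -> atmost0 f (slot k) (slot j).

Definition interaction_asymmetry0 (f : 'rV[R]_dz -> 'rV[R]_dx) : Prop :=
  atmost0_across_slots f /\
  forall z (k : 'I_K) (A C : {set 'I_dz}),
    (0 < #|A|)%N -> (0 < #|C|)%N -> A :|: C = slot k -> first_order_at f A C z.

(* block-diagonal invertible matrix w.r.t. the slot partition:
   equivalently, one invertible |B_k| x |B_k| block M_k per slot *)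
Definition slot_blockdiag_inv (M : 'M[R]_dz) : Prop :=
  M \in unitmx /\ forall i j, B i != B j -> M i j = 0.

(* fbar (M_1 z_{B_1}, ..., M_K z_{B_K}) = f z for all z *)
Definition equivalent_generator (f fbar : 'rV[R]_dz -> 'rV[R]_dx) : Prop :=
  exists M : 'M[R]_dz, slot_blockdiag_inv M /\
    forall z : 'rV[R]_dz, fbar (z *m M^T) = f z.

End Defs.

(* Main.v *)
Require Import Defs.
From HB Require Import structures.
From mathcomp Require Import all_boot all_order all_algebra.
From mathcomp Require Import all_classical all_reals all_analysis.
Set Implicit Arguments. Unset Strict Implicit. Unset Printing Implicit Defensive.
Import Order.TTheory GRing.Theory Num.Theory.
Import numFieldNormedType.Exports.
Local Open Scope ring_scope.

Section Mat.
Variables (R : realType) (dz dx K : nat) (B : 'I_dz -> 'I_K).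
Implicit Types (J : 'M[R]_(dx, dz)).

Definition IsM J (S : {set 'I_dz}) : {set 'I_dx} :=
  [set l | [exists i in S, J l i != 0]].
Definition JT J (T : {set 'I_dx}) : 'M[R]_(#|T|, dz) :=
  \matrix_(k < #|T|, i < dz) J (enum_val k) i.

Definition compM J := forall k j : 'I_K, k != j ->
  IsM J (slot B k) :&: IsM J (slot B j) = finset.set0.
Definition irrM J := forall (k : 'I_K) (S1 S2 : {set 'I_dx}),
    (0 < #|S1|)%N -> (0 < #|S2|)%N -> S1 :&: S2 = finset.set0 ->
    S1 :|: S2 = IsM J (slot B k) ->
    (\rank (JT J S1) + \rank (JT J S2) > \rank (JT J (IsM J (slot B k))))%N.
Definition at0M J := forall k j : 'I_K, k != j -> forall i j' l,
  i \in slot B k -> j' \in slot B j -> J l i * J l j' = 0.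
Definition IAM J := forall (k : 'I_K) (A C : {set 'I_dz}),
    (0 < #|A|)%N -> (0 < #|C|)%N -> A :|: C = slot B k ->
    exists i j l, [/\ i \in A, j \in C & J l i * J l j != 0].
Definition bd (M : 'M[R]_dz) := forall i j, B i != B j -> M i j = 0.

Lemma entry_row m n (A : 'M[R]_(m, n)) i j : A i j = row i A 0 j.
Proof. by rewrite mxE. Qed.

Lemma inIsM J (S : {set 'I_dz}) l : (l \in IsM J S) = [exists i in S, J l i != 0].
Proof. by rewrite inE. Qed.

Lemma notin_IsM J (S : {set 'I_dz}) l i : l \notin IsM J S -> i \in S -> J l i = 0.
Proof.
move=> H iS; apply/eqP; apply: contraNT H => nz.
by rewrite inIsM; apply/existsP; exists i; rewrite iS.
Qed.

Lemma row_JT J (T : {set 'I_dx}) (l : 'I_dx) (Hl : l \in T) : (row l J <= JT J T)%MS.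
Proof.
apply/(eq_row_sub (enum_rank_in Hl l)); apply/rowP => j.
by rewrite !mxE enum_rankK_in.
Qed.

Lemma JT_row J (T : {set 'I_dx}) t : row t (JT J T) = row (enum_val t) J.
Proof. by apply/rowP => j; rewrite !mxE. Qed.

Lemma colzero m1 m2 (A : 'M[R]_(m1, dz)) (X : 'M[R]_(m2, dz)) j :
  (forall t, X t j = 0) -> (A <= X)%MS -> forall s, A s j = 0.
Proof.
move=> Hz /submxP [D ->] s; rewrite mxE big1 // => t _.
by rewrite Hz mulr0.
Qed.

Lemma col_nz J : \rank J = dz -> forall i, exists l, J l i != 0.
Proof.
move=> rk i; apply/not_existsP => H.
have full : row_full J by rewrite /row_full rk.
have sub : ((delta_mx 0 i : 'rV[R]_dz) <= J)%MS by apply: submx_full.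
have := colzero (j := i) _ sub 0; rewrite mxE !eqxx /=.
move=> C; have : (1 : R) = 0.
  by apply: C => t; apply/eqP/negPn/negP => /(H t).
by move/eqP; rewrite oner_eq0.
Qed.

Lemma IsM_union J A C : IsM J (A :|: C) = IsM J A :|: IsM J C.
Proof.
apply/setP => l; rewrite !inE; apply/existsP/orP.
  by case=> i /andP[]; rewrite inE => /orP[] iX nz; [left|right];
    apply/existsP; exists i; rewrite iX.
by case=> /existsP[i /andP[iX nz]]; exists i; rewrite inE iX ?orbT.
Qed.

Lemma JT_sub J (T T' : {set 'I_dx}) : T \subset T' -> (JT J T <= JT J T')%MS.
Proof.
move=> sub; apply/row_subP => t; rewrite JT_row; apply: row_JT.
by have := enum_valP t => /(fintype.subsetP sub).
Qed.

Lemma rank_split J (S1 S2 : {set 'I_dx}) (A C : {set 'I_dz}) :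
  A :&: C = finset.set0 ->
  (forall l j, l \in S1 -> j \notin A -> J l j = 0) ->
  (forall l j, l \in S2 -> j \notin C -> J l j = 0) ->
  (\rank (JT J S1) + \rank (JT J S2) <= \rank (JT J (S1 :|: S2)))%N.
Proof.
move=> AC H1 H2.
have s1 : (JT J S1 <= JT J (S1 :|: S2))%MS by apply: JT_sub; apply: finset.subsetUl.
have s2 : (JT J S2 <= JT J (S1 :|: S2))%MS by apply: JT_sub; apply: finset.subsetUr.
have cap0 : \rank (JT J S1 :&: JT J S2)%MS = 0%N.
  apply/eqP; rewrite mxrank_eq0; apply/eqP/row_matrixP => t; rewrite row0.
  have : (row t (JT J S1 :&: JT J S2)%MS <= (JT J S1 :&: JT J S2))%MS by apply: row_sub.
  rewrite sub_capmx => /andP[v1 v2].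
  apply/rowP => j; rewrite [RHS]mxE.
  case: (boolP (j \in A)) => jA.
    have jC : j \notin C.
      apply/negP => jC; have : j \in A :&: C by rewrite inE jA.
      by rewrite AC inE.
    apply: (colzero _ v2) => t'; rewrite mxE; apply: H2 => //; exact: enum_valP.
  apply: (colzero _ v1) => t'; rewrite mxE; apply: H1 => //; exact: enum_valP.
rewrite -mxrank_sum_cap cap0 addn0; apply: mxrankS.
by rewrite addsmx_sub s1 s2.
Qed.

Lemma in_slot i k : (i \in slot B k) = (B i == k).
Proof. by rewrite inE. Qed.

Lemma outside_zero J k l j : compM J -> l \in IsM J (slot B k) ->
  j \notin slot B k -> J l j = 0.
Proof.
move=> cJ lk jk; apply/eqP/negPn/negP => nz.
have : l \in IsM J (slot B k) :&: IsM J (slot B (B j)).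
  rewrite inE lk /= inIsM; apply/existsP; exists j; rewrite in_slot eqxx nz //.
rewrite cJ ?inE //.
by rewrite in_slot in jk; rewrite eq_sym.
Qed.

Lemma at0_of_comp J : compM J -> at0M J.
Proof.
move=> cJ k j kj i j' l ik jj; apply/eqP/negPn/negP => nz.
have : l \in IsM J (slot B k) :&: IsM J (slot B j).
  rewrite inE !inIsM; apply/andP; split; apply/existsP.
    by exists i; rewrite ik; move: nz; rewrite mulf_eq0 negb_or => /andP[].
  by exists j'; rewrite jj; move: nz; rewrite mulf_eq0 negb_or => /andP[].
by rewrite cJ // inE.
Qed.

Lemma IA_of_comp_irr J : compM J -> irrM J -> \rank J = dz -> IAM J.
Proof.
move=> cJ iJ rk k A C A0 C0 AC.
case: (pselect (exists i j l, [/\ i \in A, j \in C & J l i * J l j != 0])) => // Hn.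
exfalso.
have H : forall i j l, i \in A -> j \in C -> J l i * J l j = 0.
  move=> i j l iA jC; apply/eqP/negPn/negP => nz; apply: Hn; by exists i, j, l.
have ACd : A :&: C = finset.set0.
  apply/setP => i; rewrite !inE; apply/negbTE/negP => /andP[iA iC].
  have [l nz] := col_nz rk i.
  by move: (H i i l iA iC) => /eqP; rewrite mulf_eq0 orbb (negbTE nz).
set S1 := IsM J A; set S2 := IsM J C.
have p1 : (0 < #|S1|)%N.
  have [i iA] : exists i, i \in A by apply/card_gt0P.
  have [l nz] := col_nz rk i.
  by apply/card_gt0P; exists l; rewrite inIsM; apply/existsP; exists i; rewrite iA.
have p2 : (0 < #|S2|)%N.
  have [i iA] : exists i, i \in C by apply/card_gt0P.
  have [l nz] := col_nz rk i.
  by apply/card_gt0P; exists l; rewrite inIsM; apply/existsP; exists i; rewrite iA.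
have disj : S1 :&: S2 = finset.set0.
  apply/setP => l; rewrite !inE; apply/negbTE/negP.
  move=> /andP[/existsP[i /andP[iA ni]] /existsP[j /andP[jC nj]]].
  by move: (H i j l iA jC) => /eqP; rewrite mulf_eq0 (negbTE ni) (negbTE nj).
have un : S1 :|: S2 = IsM J (slot B k) by rewrite -IsM_union AC.
have sub1 : forall l, l \in S1 -> l \in IsM J (slot B k).
  by move=> l l1; rewrite -un inE l1.
have sub2 : forall l, l \in S2 -> l \in IsM J (slot B k).
  by move=> l l1; rewrite -un inE l1 orbT.
have Z1 : forall l j, l \in S1 -> j \notin A -> J l j = 0.
  move=> l j l1 jA; case: (boolP (j \in C)) => jC.
    apply/eqP/negPn/negP => nz.
    have : l \in S1 :&: S2.
      by rewrite inE l1 /= inIsM; apply/existsP; exists j; rewrite jC.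
    by rewrite disj inE.
  apply: (outside_zero cJ (sub1 _ l1)).
  by rewrite -AC inE negb_or jA.
have Z2 : forall l j, l \in S2 -> j \notin C -> J l j = 0.
  move=> l j l1 jA; case: (boolP (j \in A)) => jC.
    apply/eqP/negPn/negP => nz.
    have : l \in S1 :&: S2.
      by rewrite inE l1 andbT inIsM; apply/existsP; exists j; rewrite jC.
    by rewrite disj inE.
  apply: (outside_zero cJ (sub2 _ l1)).
  by rewrite -AC inE negb_or jA jC.
move: (iJ k S1 S2 p1 p2 disj un); rewrite -un ltnNge.
by rewrite (rank_split ACd Z1 Z2).
Qed.

Definition Dk (k : 'I_K) : 'M[R]_dz := diag_mx (\row_a ((B a == k)%:R)).

Lemma bdP (M : 'M[R]_dz) : bd M <-> forall k, Dk k *m M = M *m Dk k.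
Proof.
split.
  move=> bM k; apply/matrixP => a b; rewrite mul_diag_mx mul_mx_diag !mxE.
  case: (eqVneq (B a) (B b)) => [->|ne]; first by rewrite mulrC.
  by rewrite bM // mulr0 mul0r.
move=> H a b ne; move: (H (B a)) => /matrixP /(_ a b).
rewrite mul_diag_mx mul_mx_diag !mxE eqxx mul1r eq_sym (negbTE ne) mulr0.
by [].
Qed.

Lemma bd_inv (M : 'M[R]_dz) : M \in unitmx -> bd M -> bd (invmx M).
Proof.
move=> uM /bdP H; apply/bdP => k.
have e1 : Dk k *m invmx M = invmx M *m M *m Dk k *m invmx M.
  by rewrite mulVmx // mul1mx.
rewrite e1 -(mulmxA (invmx M) M) -H !mulmxA -(mulmxA _ M) mulmxV // mulmx1.
by [].
Qed.

Lemma IsM_mulbd J Q k : bd Q -> IsM (J *m Q) (slot B k) \subset IsM J (slot B k).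
Proof.
move=> bQ; apply/fintype.subsetP => l; rewrite !inIsM => /existsP[a /andP[ak nz]].
case: (pselect (exists i, (i \in slot B k) && (J l i != 0))) => [[i Hi]|Hn].
  by apply/existsP; exists i.
exfalso; move: nz; rewrite mxE big1 ?eqxx // => j _.
case: (boolP (j \in slot B k)) => jk.
  have -> : J l j = 0 by apply/eqP/negPn/negP => nz; apply: Hn; exists j; rewrite jk.
  by rewrite mul0r.
rewrite bQ ?mulr0 //; rewrite in_slot in ak jk.
by rewrite (eqP ak); move: jk; rewrite in_slot.
Qed.

Lemma IsM_eq J Q k : Q \in unitmx -> bd Q -> IsM (J *m Q) (slot B k) = IsM J (slot B k).
Proof.
move=> uQ bQ; apply/eqP; rewrite finset.eqEsubset IsM_mulbd //=.
have {1}-> : J = (J *m Q) *m invmx Q by rewrite mulmxK.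
by apply: IsM_mulbd; apply: bd_inv.
Qed.

Lemma JT_mul J Q T : JT (J *m Q) T = JT J T *m Q.
Proof.
by apply/matrixP => t j; rewrite !mxE; apply: eq_bigr => m _; rewrite !mxE.
Qed.

Lemma transfer J Q : Q \in unitmx -> bd Q -> compM J -> irrM J ->
  [/\ compM (J *m Q), irrM (J *m Q) & \rank (J *m Q) = \rank J].
Proof.
move=> uQ bQ cJ iJ; split.
- by move=> k j kj; rewrite !IsM_eq //; apply: cJ.
- move=> k S1 S2 p1 p2 d; rewrite !IsM_eq // => un.
  by rewrite !JT_mul !mxrankMfree ?row_free_unit //; apply: iJ.
- by rewrite mxrankMfree ?row_free_unit.
Qed.

Lemma rank_le_support m (X : 'M[R]_(m, dz)) (S : {set 'I_dz}) :
  (forall t j, j \notin S -> X t j = 0) -> (\rank X <= #|S|)%N.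
Proof.
move=> HX.
pose E : 'M[R]_(#|S|, dz) := \matrix_(t, b) (enum_val t == b)%:R.
pose Y : 'M[R]_(m, #|S|) := \matrix_(s, t) X s (enum_val t).
have -> : X = Y *m E.
  apply/matrixP => s b; rewrite !mxE.
  case: (boolP (b \in S)) => bS.
    rewrite (bigD1 (enum_rank_in bS b)) //= !mxE enum_rankK_in // eqxx mulr1.
    rewrite big1 ?addr0 // => t tne; rewrite !mxE.
    case: (eqVneq (enum_val t) b) => [e|]; last by rewrite mulr0.
    by move: tne; rewrite -{2}e enum_valK_in eqxx.
  rewrite HX // big1 // => t _; rewrite !mxE.
  case: (eqVneq (enum_val t) b) => [e|]; last by rewrite mulr0.
  by move: bS; rewrite -e enum_valP.
by apply: leq_trans (mxrankM_maxr _ _) (rank_leq_row _).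
Qed.

Lemma comp_of_at0 J : at0M J -> compM J.
Proof.
move=> aJ k j kj; apply/setP => l; rewrite !inE; apply/negbTE/negP.
move=> /andP[/existsP[i /andP[ik ni]] /existsP[j' /andP[jj nj]]].
by have := aJ k j kj i j' l ik jj; apply/eqP; rewrite mulf_neq0.
Qed.

Definition gr r (M : 'M[R]_(r, dz)) (t : nat) (j : 'I_dz) : R :=
  oapp (fun u => M u j) 0 (insub t).

Lemma grE r (M : 'M[R]_(r, dz)) (u : 'I_r) j : gr M u j = M u j.
Proof. by rewrite /gr valK. Qed.

Lemma rank_pos J (T : {set 'I_dx}) l (S : {set 'I_dz}) : l \in T -> l \in IsM J S ->
  (0 < \rank (JT J T))%N.
Proof.
move=> lT; rewrite inIsM => /existsP[i /andP[iS nz]].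
rewrite lt0n mxrank_eq0; apply/negP => /eqP X0.
have := row_JT J lT; rewrite X0 => /submxP[D]; rewrite mulmx0 => /rowP /(_ i).
by rewrite !mxE => e; move: nz; rewrite e eqxx.
Qed.

Lemma irr_of_IA J : at0M J -> \rank J = dz ->
  (forall P : 'M[R]_dz, P \in unitmx -> bd P -> IAM (J *m invmx P)) -> irrM J.
Proof.
move=> aJ rk HIA k S1 S2 p1 p2 disj un.
have cJ := comp_of_at0 aJ.
rewrite ltnNge; apply/negP => Hle.
set I := IsM J (slot B k) in un Hle *.
have sub1 : forall l, l \in S1 -> l \in I by move=> l l1; rewrite -un inE l1.
have sub2 : forall l, l \in S2 -> l \in I by move=> l l1; rewrite -un inE l1 orbT.
have rowI : forall l j, l \in I -> j \notin slot B k -> J l j = 0.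
  by move=> l j; apply: outside_zero.
have rowNI : forall l j, l \notin I -> j \in slot B k -> J l j = 0.
  by move=> l j; apply: notin_IsM.
have rkI : (\rank (JT J I) <= #|slot B k|)%N.
  apply: rank_le_support => t j jk; rewrite mxE; apply: rowI => //; exact: enum_valP.
have [l1 l1S] : exists l, l \in S1 by apply/card_gt0P.
have [l2 l2S] : exists l, l \in S2 by apply/card_gt0P.
have := sub1 _ l1S; rewrite {1}inIsM => /existsP[a0 /andP[a0k _]].
set X1 := JT J S1; set X2 := JT J S2.
set r1 := \rank X1; set r2 := \rank X2.
have r1p : (0 < r1)%N by apply: (rank_pos l1S (sub1 _ l1S)).
have r2p : (0 < r2)%N by apply: (rank_pos l2S (sub2 _ l2S)).
have hn : (r1 + r2 <= #|slot B k|)%N by apply: leq_trans Hle rkI.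
set s := enum (slot B k).
have ss : size s = #|slot B k| by rewrite cardE.
pose at_ (t : nat) := nth a0 s t.
have at_in : forall t, (t < #|slot B k|)%N -> at_ t \in slot B k.
  by move=> t ht; rewrite -mem_enum mem_nth // ss.
have at_idx : forall t, (t < #|slot B k|)%N -> index (at_ t) s = t.
  by move=> t ht; rewrite index_uniq ?ss // enum_uniq.
set rb1 := row_base X1; set rb2 := row_base X2.
pose P : 'M[R]_dz := \matrix_(a, j) (if a \in slot B k then
   (if (index a s < r1)%N then gr rb1 (index a s) j else gr rb2 (index a s - r1) j)
   else (a == j)%:R).
have lt1 : forall u : 'I_r1, (u < #|slot B k|)%N.
  by move=> u; apply: leq_trans (ltn_ord u) (leq_trans (leq_addr _ _) hn).
have lt2 : forall u : 'I_r2, (r1 + u < #|slot B k|)%N.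
  by move=> u; apply: leq_trans _ hn; rewrite ltn_add2l.
have Prow1 : forall u : 'I_r1, row (at_ u) P = row u rb1.
  by move=> u; apply/rowP => j; rewrite [LHS]mxE [RHS]mxE /P mxE (at_in _ (lt1 u)) (at_idx _ (lt1 u)) ltn_ord grE.
have Prow2 : forall u : 'I_r2, row (at_ (r1 + u)) P = row u rb2.
  move=> u; apply/rowP => j; rewrite [LHS]mxE [RHS]mxE /P mxE (at_in _ (lt2 u)) (at_idx _ (lt2 u)).
  by rewrite ltnNge leq_addr /= addKn grE.
have X1rb : (X1 <= rb1)%MS by rewrite /rb1 eq_row_base.
have X2rb : (X2 <= rb2)%MS by rewrite /rb2 eq_row_base.
have rbX1 : (rb1 <= X1)%MS by rewrite /rb1 eq_row_base.
have rbX2 : (rb2 <= X2)%MS by rewrite /rb2 eq_row_base.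
have rb1P : (rb1 <= P)%MS by apply/row_subP => u; rewrite -Prow1 row_sub.
have rb2P : (rb2 <= P)%MS by apply/row_subP => u; rewrite -Prow2 row_sub.
have Pdelta : forall m, m \notin slot B k -> row m P = delta_mx 0 m.
  by move=> m mk; apply/rowP => b; rewrite !mxE (negbTE mk) eqxx eq_sym.
have Punit : P \in unitmx.
  have hJ : ((1%:M : 'M[R]_dz) <= J)%MS by rewrite sub1mx /row_full rk.
  rewrite -row_full_unit -sub1mx; apply: submx_trans hJ _.
  apply/row_subP => l.
  case: (boolP (l \in S1)) => lS1.
    exact: submx_trans (row_JT J lS1) (submx_trans X1rb rb1P).
  case: (boolP (l \in S2)) => lS2.
    exact: submx_trans (row_JT J lS2) (submx_trans X2rb rb2P).
  have lI : l \notin I by rewrite -un inE negb_or lS1.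
  rewrite (row_sum_delta (row l J)); apply: summx_sub => j _.
  case: (boolP (j \in slot B k)) => jk.
    by rewrite mxE rowNI // scale0r sub0mx.
  by apply: scalemx_sub; rewrite -Pdelta // row_sub.
have colz : forall (T : {set 'I_dx}) m (M : 'M[R]_(m, dz)), (T \subset I) ->
    (M <= JT J T)%MS -> forall u j, j \notin slot B k -> M u j = 0.
  move=> T m M TI MX u j jk; apply: (colzero _ MX) => t; rewrite mxE.
  apply: rowI => //; apply: (fintype.subsetP TI); exact: enum_valP.
have S1I : S1 \subset I by apply/fintype.subsetP.
have S2I : S2 \subset I by apply/fintype.subsetP.
have Pbd : bd P.
  move=> a j ne; rewrite mxE; case: ifP => ak.
    have jk : j \notin slot B k.
      by rewrite in_slot; rewrite in_slot in ak; rewrite -(eqP ak) eq_sym.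
    case: ifP => _; rewrite /gr; case: insub => [u|] //=.
      exact: (colz _ _ _ S1I rbX1).
    exact: (colz _ _ _ S2I rbX2).
  case: (eqVneq a j) => [e|_] //; by move: ne; rewrite e eqxx.
set A := [set a in slot B k | (index a s < r1)%N].
set C := [set a in slot B k | (r1 <= index a s)%N].
have n0 : (0 < #|slot B k|)%N by apply: leq_trans r1p (leq_trans (leq_addr _ _) hn).
have A0 : (0 < #|A|)%N.
  by apply/card_gt0P; exists (at_ 0%N); rewrite inE at_in // at_idx.
have C0 : (0 < #|C|)%N.
  have r1n : (r1 < #|slot B k|)%N.
    by apply: leq_trans hn; rewrite -addn1 leq_add2l.
  by apply/card_gt0P; exists (at_ r1); rewrite inE (at_in _ r1n) (at_idx _ r1n) leqnn.
have AC : A :|: C = slot B k.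
  apply/setP => a; rewrite !inE -andb_orr; case: (B a == k) => //=.
  by case: ltnP.
have [i [j [l [iA jC nz]]]] := HIA P Punit Pbd k A C A0 C0 AC.
have PQ : forall a b, (P *m invmx P) a b = (a == b)%:R.
  by move=> a b; rewrite mulmxV // mxE.
have zero1 : forall u : 'I_r1, forall c, c \in C -> (rb1 *m invmx P) u c = 0.
  move=> u c cC; rewrite entry_row row_mul -Prow1 -row_mul -entry_row PQ.
  case: eqP => // e; move: cC; rewrite -e inE at_idx // leqNgt ltn_ord.
  by rewrite andbF.
have zero2 : forall u : 'I_r2, forall c, c \in A -> (rb2 *m invmx P) u c = 0.
  move=> u c cA; rewrite entry_row row_mul -Prow2 -row_mul -entry_row PQ.
  case: eqP => // e; move: cA; rewrite -e inE at_idx // ltnNge leq_addr.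
  by rewrite andbF.
move: nz; apply/negP; rewrite negbK mulf_eq0; apply/orP.
case: (boolP (l \in S1)) => lS1.
  right; apply/eqP.
  have /submxP [y Hy] := submx_trans (row_JT J lS1) X1rb.
  rewrite entry_row row_mul Hy -mulmxA mxE big1 // => u _.
  by rewrite zero1 // mulr0.
case: (boolP (l \in S2)) => lS2.
  left; apply/eqP.
  have /submxP [y Hy] := submx_trans (row_JT J lS2) X2rb.
  rewrite entry_row row_mul Hy -mulmxA mxE big1 // => u _.
  by rewrite zero2 // mulr0.
have lI : l \notin I by rewrite -un inE negb_or lS1.
have ik : i \in slot B k by rewrite -AC inE iA.
left; apply/eqP; rewrite mxE big1 // => m _.
case: (boolP (m \in slot B k)) => mk; first by rewrite rowNI // mul0r.
have -> : invmx P m i = (P *m invmx P) m i.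
  by rewrite [RHS]entry_row row_mul Pdelta // -rowE mxE.
rewrite PQ; case: eqP => [e|_]; last by rewrite mulr0.
by move: mk; rewrite e ik.
Qed.

End Mat.
Section Bridge.
Variables (R : realType) (dz dx : nat).
Implicit Types (f : 'rV[R]_dz -> 'rV[R]_dx).

Lemma pderE f i l z : differentiable f z -> pder f i l z = jacobian f z i l.
Proof. by move=> df; rewrite /pder deriveEjacobian // /ebasis -rowE mxE. Qed.

Lemma pder_comp f (L : 'M[R]_dz) i l w : (forall z, differentiable f z) ->
  pder (fun v => f (v *m L)) i l w = (jac f (w *m L) *m L^T) l i.
Proof.
move=> df.
rewrite /pder (_ : 'D_(ebasis R i) (fun v => f (v *m L)) w = 'D_(ebasis R i *m L) f (w *m L)); last first.
  rewrite /derive; do 2 f_equal; apply: funext => h /=.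
  by rewrite mulmxDl scalemxAl.
rewrite deriveEjacobian // /ebasis -mulmxA -rowE !mxE.
apply: eq_bigr => j _; rewrite !mxE pderE // mulrC; congr (_ * _).
by rewrite /jacobian mxE.
Qed.
End Bridge.

Lemma pj (R : realType) (dz dx : nat) (g : 'rV[R]_dz -> 'rV[R]_dx) i l z :
  pder g i l z = jac g z l i.
Proof. by rewrite mxE. Qed.

Lemma Iset_jac (R : realType) (dz dx : nat) (g : 'rV[R]_dz -> 'rV[R]_dx) S z :
  Iset g S z = IsM (jac g z) S.
Proof.
by apply/setP => l; rewrite !inE; apply: eq_existsb => i; rewrite mxE.
Qed.

Lemma jacT_jac (R : realType) (dz dx : nat) (g : 'rV[R]_dz -> 'rV[R]_dx) T z :
  jacT g T z = JT (jac g z) T.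
Proof. by apply/matrixP => t i; rewrite !mxE. Qed.

Lemma jac_comp (R : realType) (dz dx : nat) (g : 'rV[R]_dz -> 'rV[R]_dx) (L : 'M[R]_dz) w :
  (forall z, differentiable g z) ->
  jac (fun v => g (v *m L)) w = jac g (w *m L) *m L^T.
Proof. by move=> dg; apply/matrixP => l i; rewrite mxE pder_comp. Qed.

Theorem mainTheorem9 (R : realType) (dz dx K : nat) (B : 'I_dz -> 'I_K)
  (f : 'rV[R]_dz -> 'rV[R]_dx) :
  slots_nonempty B ->
  C1_diffeo_onto_image f ->
  (compositional B f /\ irreducible B f) <->
  (atmost0_across_slots B f /\
   forall fbar, equivalent_generator B f fbar -> interaction_asymmetry0 B fbar).
Proof.
move=> _ [Hd _ Hrk _]; split.
- case=> Hc Hi.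
  have cM : forall z, compM B (jac f z).
    by move=> z k j kj; rewrite -!Iset_jac; apply: Hc.
  have iM : forall z, irrM B (jac f z).
    move=> z k S1 S2 p1 p2 d un; rewrite -Iset_jac -!jacT_jac.
    by apply: Hi => //; rewrite Iset_jac.
  split.
    move=> k j kj z i j' ik jj l; rewrite !pj.
    exact: (at0_of_comp (cM z) kj l ik jj).
  move=> fbar [M [[uM bM] Heq]].
  have Hf : fbar = (fun w => f (w *m invmx M^T)).
    by apply: funext => w; rewrite -Heq mulmxKV // unitmx_tr.
  have jacE : forall w, jac fbar w = jac f (w *m invmx M^T) *m invmx M.
    by move=> w; rewrite Hf jac_comp // trmx_inv trmxK.
  have uQ : invmx M \in unitmx by rewrite unitmx_inv.
  have bQ : bd B (invmx M) by apply: bd_inv.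
  have T : forall w, [/\ compM B (jac fbar w), irrM B (jac fbar w) & \rank (jac fbar w) = dz].
    move=> w; rewrite jacE; have [c i r] := transfer uQ bQ (cM (w *m invmx M^T)) (iM _).
    by split => //; rewrite r Hrk.
  split.
    move=> k j kj z i j' ik jj l; rewrite !pj.
    by have [c _ _] := T z; exact: (at0_of_comp c kj l ik jj).
  move=> z k A C A0 C0 AC.
  have [c i r] := T z.
  have [i0 [j0 [l0 [iA jC nz]]]] := IA_of_comp_irr c i r A0 C0 AC.
  by exists i0, j0, l0; rewrite !pj.
- case=> Ha Hall.
  have aM : forall z, at0M B (jac f z).
    move=> z k j kj i j' l ik jj; rewrite -!pj; exact: (Ha k j kj z i j' ik jj l).
  split.
    by move=> z k j kj; rewrite !Iset_jac; apply: comp_of_at0.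
  move=> z k S1 S2 p1 p2 d un; rewrite Iset_jac !jacT_jac; rewrite Iset_jac in un.
  apply: (irr_of_IA (aM z) (Hrk z)) => //.
  move=> P uP bP k' A C A0 C0 AC.
  pose fbar := fun w => f (w *m invmx P^T).
  have eg : equivalent_generator B f fbar.
    exists P; split; first by split.
    by move=> z'; rewrite /fbar mulmxK // unitmx_tr.
  have [_ IA2] := Hall fbar eg.
  have [i [j [l [iA jC nz]]]] := IA2 (z *m P^T) k' A C A0 C0 AC.
  exists i, j, l; split => //.
  move: nz; rewrite !pj /fbar jac_comp // mulmxK ?unitmx_tr // trmx_inv trmxK.
  by [].
Qed.
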